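(* Let $p,q,r\in(0,1)$ with $p+q+r=1$. Let $X_1,\eta_2,\eta_3,\ldots$ be independent random variables, each taking the values $1,-1,0$ with probabilities $p,q,r$ respectively, and let $K_3,K_4,\ldots$ be i.i.d. random variables, uniformly distributed on $\{1,2\}$ and independent of the previous ones. Set $X_2=\eta_2X_1$, $X_{n+1}=\eta_{n+1}X_{K_{n+1}}$ for $n\ge2$, and $S_n=\sum_{k=1}^nX_k$. Then: (a) as $n\to\infty$, $S_n/n$ converges in distribution to a random variable taking the value $p-q$ with probability $p^2$, the value $(p-q)/2$ with probability $pr$, the value $0$ with probability $pq+q^2+r$, the value $-(p-q)/2$ with probability $qr$, and the value $-(p-q)$ with probability $pq$; (b) as $n\to\infty$, $E(S_n/n)\to\dfrac{(p-q)^2}{2}(1+p-q)$ and $\operatorname{Var}(S_n/n)\to\dfrac{(p-q)^2}{4}\Big((p+q)(1+3p-q)-(p-q)^2\big(1+(p-q)\big)^2\Big)$.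
   Context: This is the elephant random walk with delays in which the elephant remembers only the first two steps: the second step is built from the first, and each step $n+1\ge3$ picks one of the first two steps uniformly at random and repeats it (probability $p$), reverses it (probability $q$), or is $0$ (probability $r$). *)

(* Defs.v *)
From HB Require Import structures.
From mathcomp Require Import all_boot all_order all_algebra.
From mathcomp Require Import all_classical all_reals all_analysis.
Set Implicit Arguments. Unset Strict Implicit. Unset Printing Implicit Defensive.
Import Order.TTheory GRing.Theory Num.Theory.
Import numFieldNormedType.Exports.
Local Open Scope classical_set_scope.
Local Open Scope ring_scope.

(* Indices of the driving random variables:
   None          = X_1,
   Some (inl n)  = eta_n   (n >= 2),
   Some (inr n)  = K_n     (n >= 3). *)
Definition erw_index := option (nat + nat)%type.

Definition erw_valid (i : erw_index) : bool :=
  match i with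
  | None => true
  | Some (inl n) => (2 <= n)%N
  | Some (inr n) => (3 <= n)%N
  end.

Section erw.
Context {d : measure_display} {T : measurableType d} {R : realType}.

Definition sigma_real (Y : T -> R) : set (set T) :=
  [set A | exists2 B : set R, measurable B & A = Y @^-1` B].

Definition sigma_nat (Y : T -> nat) : set (set T) :=
  [set A | exists B : set nat, A = Y @^-1` B].

Definition erw_events (X1 : T -> R) (eta : nat -> T -> R) (K : nat -> T -> nat)
    (i : erw_index) : set (set T) :=
  match i with
  | None => sigma_real X1
  | Some (inl n) => sigma_real (eta n)
  | Some (inr n) => sigma_nat (K n)
  end.

Definition erw_independent (P : probability T R) (X1 : T -> R)
    (eta : nat -> T -> R) (K : nat -> T -> nat) : Prop :=
  forall (J : seq erw_index) (A : erw_index -> set T),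
    uniq J -> all erw_valid J ->
    (forall j, j \in J -> erw_events X1 eta K j (A j)) ->
    P (\big[setI/setT]_(j <- J) A j) = (\prod_(j <- J) P (A j))%E.

(* The walk: X_1 given, X_2 = eta_2 X_1, X_{n+1} = eta_{n+1} X_{K_{n+1}}
   for n >= 2 (K takes values in {1,2} almost surely; on the null set where it
   does not, we put 0). *)
Definition erw_X (X1 : T -> R) (eta : nat -> T -> R) (K : nat -> T -> nat)
    (n : nat) : T -> R :=
  fun t =>
    match n with
    | 0 => 0
    | 1 => X1 t
    | 2 => eta 2%N t * X1 t
    | _ => eta n t * (if K n t == 1%N then X1 t
                      else if K n t == 2%N then eta 2%N t * X1 t else 0)
    end.

Definition erw_S X1 eta K (n : nat) : T -> R :=
  fun t => \sum_(1 <= k < n.+1) erw_X X1 eta K k t.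

Definition cvg_in_distribution (P : probability T R) (Z : nat -> T -> R)
    (F : R -> R) : Prop :=
  forall x : R, {for x, continuous F} ->
    (fun n => fine (P [set t | Z n t <= x])) @ \oo --> F x.
End erw.

Definition erw_limit_cdf {R : realType} (p q r : R) (x : R) : R :=
  (if p - q <= x then p ^+ 2 else 0)
  + (if (p - q) / 2 <= x then p * r else 0)
  + (if 0 <= x then p * q + q ^+ 2 + r else 0)
  + (if - ((p - q) / 2) <= x then q * r else 0)
  + (if - (p - q) <= x then p * q else 0).

(* Main.v *)
Require Import Defs.
From HB Require Import structures.
From mathcomp Require Import all_boot all_order all_algebra.
From mathcomp Require Import all_classical all_reals all_analysis.
From mathcomp Require Import ring lra.
From mathcomp Require Import measurable_realfun.
Set Implicit Arguments. Unset Strict Implicit. Unset Printing Implicit Defensive.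
Import Order.TTheory GRing.Theory Num.Theory.
Import numFieldNormedType.Exports.
Local Open Scope classical_set_scope.
Local Open Scope ring_scope.

Section Cells.
Context (d : measure_display) (T : measurableType d) (R : realType) (P : probability T R).

Lemma bigsetUP (I : eqType) (s : seq I) (C : I -> set T) t :
  (\big[setU/set0]_(j <- s) C j) t <-> exists2 i, i \in s & C i t.
Proof.
elim: s => [|a s IH]; first by rewrite big_nil; split => // -[].
rewrite big_cons; split.
  case=> [Ca|/IH[i si Ci]]; first by exists a => //; rewrite mem_head.
  by exists i => //; rewrite inE si orbT.
case=> i; rewrite inE => /orP[/eqP-> Ca|si Ci]; first by left.
by right; apply/IH; exists i.
Qed.

Lemma expect_cells (I : eqType) (s : seq I) (C : I -> set T) (v : I -> R) (f : T -> R) :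
  uniq s -> (forall i, measurable (C i)) -> trivIset [set` s] C ->
  measurable_fun setT f ->
  (forall i t, i \in s -> C i t -> f t = v i) ->
  P (~` \big[setU/set0]_(i <- s) C i) = 0%E ->
  ('E_P[f] = (\sum_(i <- s) v i * fine (P (C i)))%:E)%E.
Proof.
move=> us mC tC mf fv PU.
set U := \big[setU/set0]_(i <- s) C i.
have mU : measurable U by apply: bigsetU_measurable.
pose h t := f t * \1_U t.
have mh : measurable_fun setT h by apply: measurable_funM => //; exact: measurable_indic.
rewrite unlock.
transitivity (\int[P]_x (h x)%:E)%E.
  apply: ae_eq_integral => //.
  - exact/measurable_EFinP.
  - exact/measurable_EFinP.
  exists (~` U); split => //; first exact: measurableC.
  move=> t /= ht Ut; apply: ht => _.
  by rewrite /h indicE mem_set // mulr1.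
rewrite -(setUv U) integral_setU //; try (by apply: measurableC);
  try (by rewrite setUv; exact/measurable_EFinP).
rewrite [X in (_ + X)%E](_ : _ = 0%E); last first.
  rewrite -(integral0 P (~` U)); apply: eq_integral => t; rewrite inE => nU.
  by rewrite /h indicE memNset // mulr0.
rewrite adde0 /U integral_bigsetU_EFin //; last first.
  by apply/measurable_EFinP; apply: measurable_funS mh.
rewrite -sumEFin big_seq [RHS]big_seq; apply: eq_bigr => i si.
transitivity (\int[P]_(x in C i) (cst (v i)%:E x))%E.
  apply: eq_integral => t; rewrite inE => Ct.
  rewrite /h indicE mem_set ?mulr1 ?(fv i t) //.
  by apply/bigsetUP; exists i.
by rewrite integral_cst // EFinM fineK // fin_num_measure.
by rewrite disj_set2E setICr.
Qed.
End Cells.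

Lemma ev_cvg (R : realType) (u v : nat -> R) (l : R) : (exists N, forall n, (N <= n)%N -> u n = v n) ->
  v n @[n --> \oo] --> l -> u n @[n --> \oo] --> l.
Proof.
move=> [N hN] hv; apply: cvg_trans hv; apply: near_eq_cvg.
by exists N => // n /= hn; rewrite hN.
Qed.

Lemma lim_poly (R : realType) (u : nat -> R) (a b c : R) :
  (forall i, u i.+2 = a + b / (i.+2)%:R + c / ((i.+2)%:R ^+ 2)) -> u n @[n --> \oo] --> a.
Proof.
move=> hu.
have h0 : ((n%:R : R)^-1) @[n --> \oo] --> 0 by rewrite -cvg_shiftS /=; exact: cvg_harmonic.
have h : (a + b * (n%:R : R)^-1 + c * ((n%:R)^-1 * (n%:R)^-1)) @[n --> \oo] --> a + b * 0 + c * (0 * 0).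
  apply: cvgD; [apply: cvgD; [exact: cvg_cst | apply: cvgM => //; exact: cvg_cst] |].
  apply: cvgM; [exact: cvg_cst | exact: cvgM].
rewrite !mul0r !mulr0 !addr0 in h.
apply: ev_cvg h; exists 2%N => -[|[|i]] // _.
by rewrite hu -exprVn expr2.
Qed.

Section Main.
Context (d : measure_display) (T : measurableType d) (R : realType)
  (P : probability T R) (p q r : R)
  (X1 : T -> R) (eta : nat -> T -> R) (K : nat -> T -> nat).
Hypotheses (hp : 0 < p < 1) (hq : 0 < q < 1) (hr : 0 < r < 1) (hpqr : p + q + r = 1)
  (mX1 : measurable_fun setT X1)
  (meta : forall n, (2 <= n)%N -> measurable_fun setT (eta n))
  (mK : forall n k, (3 <= n)%N -> measurable [set t | K n t = k])
  (PX1 : P [set t | X1 t = 1] = p%:E)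
  (PX2 : P [set t | X1 t = -1] = q%:E)
  (PX3 : P [set t | X1 t = 0] = r%:E)
  (Peta : forall n, (2 <= n)%N ->
     [/\ P [set t | eta n t = 1] = p%:E,
         P [set t | eta n t = -1] = q%:E &
         P [set t | eta n t = 0] = r%:E])
  (PK : forall n, (3 <= n)%N ->
     P [set t | K n t = 1%N] = (2^-1)%:E /\ P [set t | K n t = 2%N] = (2^-1)%:E)
  (hind : erw_independent P X1 eta K).

Definition vs : seq R := [:: 1; -1; 0].
Definition ks : seq nat := [:: 1%N; 2%N].

Lemma mset (Y : T -> R) : measurable_fun setT Y -> forall a, measurable [set t | Y t = a].
Proof. by move=> mY a; have := mY measurableT [set a] (measurable_set1 a); rewrite setTI. Qed.

Lemma PE (B : set T) : measurable B -> P B = (fine (P B))%:E.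
Proof. by move=> mB; rewrite fineK // fin_num_measure. Qed.

Lemma disj_lev (Y : T -> R) (a b : R) : a != b ->
  [set t | Y t = a] `&` [set t | Y t = b] = set0.
Proof.
move=> ab; apply/seteqP; split => t //= [ha hb].
by move: ab; rewrite -ha -hb eqxx.
Qed.

Lemma n1N1 : (1 : R) != -1.
Proof. by rewrite -subr_eq0 opprK (_ : 1 + 1 = 2%:R) // pnatr_eq0. Qed.

Lemma n10 : (1 : R) != 0. Proof. exact: oner_neq0. Qed.
Lemma nN10 : (-1 : R) != 0. Proof. by rewrite oppr_eq0 oner_eq0. Qed.

Lemma PU (A B : set T) : measurable A -> measurable B -> A `&` B = set0 ->
  P (A `|` B) = (P A + P B)%E.
Proof. exact: measureU. Qed.

Lemma PC (A : set T) : measurable A -> P (~` A) = (1 - P A)%E.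
Proof. exact: probability_setC. Qed.

Lemma Ple (A B : set T) : measurable A -> measurable B -> A `<=` B -> (P A <= P B)%E.
Proof. by move=> mA mB AB; apply: le_measure => //; rewrite inE. Qed.

Lemma PU2 (A B : set T) : measurable A -> measurable B -> (P (A `|` B) <= P A + P B)%E.
Proof. exact: measureU2. Qed.

Definition bad3 (Y : T -> R) :=
  ~` ([set t | Y t = 1] `|` [set t | Y t = -1] `|` [set t | Y t = 0]).

Lemma bad3_null (Y : T -> R) : measurable_fun setT Y ->
  P [set t | Y t = 1] = p%:E -> P [set t | Y t = -1] = q%:E ->
  P [set t | Y t = 0] = r%:E -> P (bad3 Y) = 0%E.
Proof.
move=> mY h1 h2 h3.
have m := mset mY.
rewrite /bad3 PC; last by apply: measurableU; [apply: measurableU|].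
rewrite PU //; last 2 first.
- exact: measurableU.
- by rewrite setIUl !disj_lev ?setU0 ?n10 ?nN10.
rewrite PU // ?disj_lev ?n1N1 // h1 h2 h3 -!EFinD hpqr.
by rewrite subrr.
Qed.

Definition badK (n : nat) := ~` ([set t | K n t = 1%N] `|` [set t | K n t = 2%N]).

Lemma badK_null n : (3 <= n)%N -> P (badK n) = 0%E.
Proof.
move=> n3; have [h1 h2] := PK n3.
rewrite /badK PC; last by apply: measurableU; apply: mK.
rewrite PU //; try by apply: mK.
  rewrite h1 h2 -EFinD (_ : 2^-1 + 2^-1 = 1 :> R) ?subrr //; field.
  by [].
by apply/seteqP; split => t //= [-> ].
Qed.


Definition cell6 j k (c : R * R * R * nat * R * nat) : set T :=
  let '(a, e, u, x, u', x') := c in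
  [set t | X1 t = a /\ eta 2 t = e /\ eta j t = u /\ K j t = x /\ eta k t = u' /\ K k t = x'].

Definition s6 : seq (R * R * R * nat * R * nat) :=
  [seq (x, y) | x <- [seq (x, y) | x <- [seq (x, y) | x <- [seq (x, y) | x <-
     [seq (x, y) | x <- vs, y <- vs], y <- vs], y <- ks], y <- vs], y <- ks].

Lemma uniq_vs : uniq vs.
Proof.
rewrite /vs /= !inE !negb_or n1N1 /= andbT.
by apply/andP; split; [exact: n10 | exact: nN10].
Qed.

Lemma uniq_s6 : uniq s6.
Proof.
have inj (A B : eqType) (s1 : seq A) (s2 : seq B) :
   {in [seq (x1, x2) | x1 <- s1, x2 <- s2] &, injective (uncurry (@pair A B))}.
  by move=> [? ?] [? ?] _ _ /= [-> ->].
by repeat apply: allpairs_uniq => //; exact: uniq_vs.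
Qed.

Lemma mcell6 j k c : (3 <= j)%N -> (3 <= k)%N -> measurable (cell6 j k c).
Proof.
move=> j3 k3; case: c => [[[[[a e] u] x] u'] x'] /=.
have j2 : (2 <= j)%N by apply: leq_trans j3.
have k2 : (2 <= k)%N by apply: leq_trans k3.
rewrite (_ : [set t | _] = [set t | X1 t = a] `&` ([set t | eta 2 t = e] `&`
  ([set t | eta j t = u] `&` ([set t | K j t = x] `&` ([set t | eta k t = u'] `&`
   [set t | K k t = x']))))) //.
repeat apply: measurableI; try (by apply: mK); apply: mset => //; exact: meta.
Qed.


Lemma Pcell6 j k a e u x u' x' : (3 <= j)%N -> (3 <= k)%N -> j != k ->
  fine (P (cell6 j k (a, e, u, x, u', x'))) =
  fine (P [set t | X1 t = a]) * fine (P [set t | eta 2 t = e]) *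
  fine (P [set t | eta j t = u]) * fine (P [set t | K j t = x]) *
  fine (P [set t | eta k t = u']) * fine (P [set t | K k t = x']).
Proof.
move=> j3 k3 jk.
have j2' : (2 <= j)%N by apply: leq_trans j3.
have k2' : (2 <= k)%N by apply: leq_trans k3.
have j2 : (j == 2%N) = false by apply/negbTE; rewrite neq_ltn; apply/orP; right.
have k2 : (k == 2%N) = false by apply/negbTE; rewrite neq_ltn; apply/orP; right.
have kj : (k == j) = false by apply/negbTE; rewrite eq_sym.
pose J : seq erw_index :=
  [:: None; Some (inl 2%N); Some (inl j); Some (inr j); Some (inl k); Some (inr k)].
pose A (i : erw_index) : set T := match i with
  | None => [set t | X1 t = a]
  | Some (inl n) => if n == 2%N then [set t | eta 2 t = e]
                    else if n == j then [set t | eta j t = u] else [set t | eta k t = u']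
  | Some (inr n) => if n == j then [set t | K j t = x] else [set t | K k t = x']
  end.
have uJ : uniq J.
  rewrite /J /= !inE !eqE /= !eqE /=.
  by rewrite !orbF ![(2%N == _)]eq_sym j2 k2 jk.
have vJ : all erw_valid J by rewrite /= j2' j3 k2' k3.
have eJ : forall i, i \in J -> erw_events X1 eta K i (A i).
  move=> i; rewrite /J !inE => /or4P[h|h|h|/or3P[h|h|h]]; move/eqP: h => ->;
    rewrite /A /= ?eqxx ?j2 ?k2 ?kj.
  - by exists [set a]; [exact: measurable_set1|].
  - by exists [set e]; [exact: measurable_set1|].
  - by exists [set u]; [exact: measurable_set1|].
  - by exists [set x].
  - by exists [set u']; [exact: measurable_set1|].
  - by exists [set x'].
have := hind uJ vJ eJ.
have -> : \big[setI/setT]_(i <- J) A i = cell6 j k (a, e, u, x, u', x').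
  by rewrite /J !big_cons big_nil /A eqxx j2 k2 kj eqxx setIT.
move=> ->; rewrite /J !big_cons big_nil /A eqxx j2 k2 kj eqxx.
rewrite [P [set t | X1 t = a]]PE; last exact: mset.
rewrite [P [set t | eta 2 t = e]]PE; last by apply: mset; apply: meta.
rewrite [P [set t | eta j t = u]]PE; last by apply: mset; apply: meta.
rewrite [P [set t | eta k t = u']]PE; last by apply: mset; apply: meta.
rewrite [P [set t | K j t = x]]PE; last exact: mK.
rewrite [P [set t | K k t = x']]PE; last exact: mK.
by rewrite mule1 -!EFinM /= !mulrA.
Qed.


Lemma in_vs (Y : T -> R) t : ~ bad3 Y t -> Y t \in vs.
Proof. by rewrite /bad3 => /contrapT [[h|h]|h]; rewrite /vs !inE h ?eqxx ?orbT. Qed.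

Lemma in_ks n t : ~ badK n t -> K n t \in ks.
Proof. by rewrite /badK => /contrapT [h|h]; rewrite /ks !inE h ?eqxx ?orbT. Qed.

Lemma negl_bad3 (Y : T -> R) : measurable_fun setT Y ->
  P [set t | Y t = 1] = p%:E -> P [set t | Y t = -1] = q%:E ->
  P [set t | Y t = 0] = r%:E -> P.-negligible (bad3 Y).
Proof.
move=> mY h1 h2 h3; apply/negligibleP; last exact: bad3_null.
by apply: measurableC; repeat apply: measurableU; apply: mset.
Qed.

Lemma negl_badK n : (3 <= n)%N -> P.-negligible (badK n).
Proof.
move=> n3; apply/negligibleP; last exact: badK_null.
by apply: measurableC; apply: measurableU; apply: mK.
Qed.

Lemma negl_eta n : (2 <= n)%N -> P.-negligible (bad3 (eta n)).
Proof. by move=> n2; have [h1 h2 h3] := Peta n2; apply: negl_bad3 => //; exact: meta. Qed.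

Lemma negl_X1 : P.-negligible (bad3 X1).
Proof. exact: negl_bad3. Qed.

Lemma E6 j k (g : R -> R -> R -> nat -> R -> nat -> R) :
  (3 <= j)%N -> (3 <= k)%N -> j != k ->
  measurable_fun setT (fun t => g (X1 t) (eta 2 t) (eta j t) (K j t) (eta k t) (K k t)) ->
  ('E_P[fun t => g (X1 t) (eta 2 t) (eta j t) (K j t) (eta k t) (K k t)] =
  (\sum_(a <- vs) \sum_(e <- vs) \sum_(u <- vs) \sum_(x <- ks) \sum_(u' <- vs) \sum_(x' <- ks)
   g a e u x u' x' * (fine (P [set t | X1 t = a]) * fine (P [set t | eta 2 t = e]) *
  fine (P [set t | eta j t = u]) * fine (P [set t | K j t = x]) *
  fine (P [set t | eta k t = u']) * fine (P [set t | K k t = x'])))%:E)%E.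
Proof.
move=> j3 k3 jk mg.
have j2' : (2 <= j)%N by apply: leq_trans j3.
have k2' : (2 <= k)%N by apply: leq_trans k3.
rewrite (@expect_cells _ _ _ P _ s6 (cell6 j k)
  (fun c => let '(a, e, u, x, u', x') := c in g a e u x u' x')).
- congr EFin; rewrite /s6 !big_allpairs.
  apply: eq_bigr => a _; apply: eq_bigr => e _; apply: eq_bigr => u _.
  apply: eq_bigr => x _; apply: eq_bigr => u' _; apply: eq_bigr => x' _.
  by rewrite /= Pcell6.
- exact: uniq_s6.
- by move=> c; exact: mcell6.
- move=> [[[[[a e] u] x] u'] x'] [[[[[a2 e2] u2] x2] u2'] x2'] _ _.
  move=> [t [/= [h1 [h2 [h3 [h4 [h5 h6]]]]] [g1 [g2 [g3 [g4 [g5 g6]]]]]]].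
  by rewrite -h1 -h2 -h3 -h4 -h5 -h6 g1 g2 g3 g4 g5 g6.
- exact: mg.
- by move=> [[[[[a e] u] x] u'] x'] t _ /= [-> [-> [-> [-> [-> ->]]]]].
apply/negligibleP.
  by apply: measurableC; apply: bigsetU_measurable => c _; exact: mcell6.
apply: (@negligibleS _ _ _ _ (bad3 X1 `|` bad3 (eta 2) `|` bad3 (eta j) `|` badK j
   `|` bad3 (eta k) `|` badK k)).
  move=> t nU; apply: contrapT => nN; apply: nU; apply/bigsetUP.
  exists (X1 t, eta 2 t, eta j t, K j t, eta k t, K k t); last by [].
  have nb : forall (A B : set T), ~ (A `|` B) t -> ~ A t /\ ~ B t.
    by move=> A B h; split => h'; apply: h; [left|right].
  have [/nb [/nb [/nb [/nb [b1 b2] b3] b4] b5] b6] := nb _ _ nN.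
  rewrite /s6; repeat apply: allpairs_f.
  all: try (first [apply: in_vs; assumption | apply: in_ks; assumption]).
repeat apply: negligibleU.
- exact: negl_X1.
- exact: negl_eta.
- exact: negl_eta.
- exact: negl_badK.
- exact: negl_eta.
- exact: negl_badK.
Qed.


Definition cl (x : R) : R := if x == 1 then 1 else if x == -1 then -1 else 0.
Arguments cl : simpl never.
Lemma cl1 : cl 1 = 1. Proof. by rewrite /cl eqxx. Qed.
Lemma clN1 : cl (-1) = -1. Proof. by rewrite /cl eq_sym (negbTE n1N1) eqxx. Qed.
Lemma cl0 : cl 0 = 0. Proof. by rewrite /cl eq_sym (negbTE n10) eq_sym (negbTE nN10). Qed.

Definition Xg (a e u : R) (x : nat) : R :=
  cl u * (if x == 1%N then cl a else if x == 2%N then cl e * cl a else 0).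

Lemma pX1_1 : fine (P [set t | X1 t = 1]) = p. Proof. by rewrite PX1. Qed.
Lemma pX1_2 : fine (P [set t | X1 t = -1]) = q. Proof. by rewrite PX2. Qed.
Lemma pX1_3 : fine (P [set t | X1 t = 0]) = r. Proof. by rewrite PX3. Qed.
Lemma pe_1 n : (2 <= n)%N -> fine (P [set t | eta n t = 1]) = p.
Proof. by move=> n2; have [-> _ _] := Peta n2. Qed.
Lemma pe_2 n : (2 <= n)%N -> fine (P [set t | eta n t = -1]) = q.
Proof. by move=> n2; have [_ -> _] := Peta n2. Qed.
Lemma pe_3 n : (2 <= n)%N -> fine (P [set t | eta n t = 0]) = r.
Proof. by move=> n2; have [_ _ ->] := Peta n2. Qed.
Lemma pk_1 n : (3 <= n)%N -> fine (P [set t | K n t = 1%N]) = 2^-1.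
Proof. by move=> n3; have [-> _] := PK n3. Qed.
Lemma pk_2 n : (3 <= n)%N -> fine (P [set t | K n t = 2%N]) = 2^-1.
Proof. by move=> n3; have [_ ->] := PK n3. Qed.

Definition w3 (a : R) : R := if a == 1 then p else if a == -1 then q else r.
Lemma w31 : w3 1 = p. Proof. by rewrite /w3 eqxx. Qed.
Lemma w3N1 : w3 (-1) = q. Proof. by rewrite /w3 eq_sym (negbTE n1N1) eqxx. Qed.
Lemma w30 : w3 0 = r. Proof. by rewrite /w3 eq_sym (negbTE n10) eq_sym (negbTE nN10). Qed.

Definition Ev3 (f : R -> R) : R := \sum_(a <- vs) f a * w3 a.
Definition EvK (f : nat -> R) : R := \sum_(x <- ks) f x * 2^-1.
Definition CE (g : R -> R -> R -> nat -> R) (a e : R) : R := Ev3 (fun u => EvK (fun x => g a e u x)).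

Lemma Ev3E f : Ev3 f = f 1 * p + f (-1) * q + f 0 * r.
Proof. by rewrite /Ev3 /vs !big_cons big_nil w31 w3N1 w30 addr0 addrA. Qed.
Lemma EvKE f : EvK f = (f 1%N + f 2%N) / 2.
Proof. by rewrite /EvK /ks !big_cons big_nil addr0 mulrDl. Qed.

Lemma Ev3_cst c : Ev3 (fun _ => c) = c.
Proof. have hr1 : r = 1 - p - q by rewrite -hpqr; ring. by rewrite Ev3E hr1; ring. Qed.
Lemma EvK_cst c : EvK (fun _ => c) = c.
Proof. by rewrite EvKE; field. Qed.

Lemma fX1 a : a \in vs -> fine (P [set t | X1 t = a]) = w3 a.
Proof.
by rewrite /vs !inE => /or3P[] /eqP ->; rewrite ?w31 ?w3N1 ?w30 ?pX1_1 ?pX1_2 ?pX1_3.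
Qed.
Lemma feta n a : (2 <= n)%N -> a \in vs -> fine (P [set t | eta n t = a]) = w3 a.
Proof.
move=> n2; rewrite /vs !inE => /or3P[] /eqP ->;
  by rewrite ?w31 ?w3N1 ?w30 ?(pe_1 n2) ?(pe_2 n2) ?(pe_3 n2).
Qed.
Lemma fK n x : (3 <= n)%N -> x \in ks -> fine (P [set t | K n t = x]) = 2^-1.
Proof. by move=> n3; rewrite /ks !inE => /orP[] /eqP ->; rewrite ?(pk_1 n3) ?(pk_2 n3). Qed.

Lemma E6N j k (g : R -> R -> R -> nat -> R -> nat -> R) :
  (3 <= j)%N -> (3 <= k)%N -> j != k ->
  measurable_fun setT (fun t => g (X1 t) (eta 2 t) (eta j t) (K j t) (eta k t) (K k t)) ->
  ('E_P[fun t => g (X1 t) (eta 2 t) (eta j t) (K j t) (eta k t) (K k t)] =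
  (Ev3 (fun a => Ev3 (fun e => Ev3 (fun u => EvK (fun x => Ev3 (fun u' =>
    EvK (fun x' => g a e u x u' x')))))))%:E)%E.
Proof.
move=> j3 k3 jk mg.
have j2 : (2 <= j)%N by apply: leq_trans j3.
have k2 : (2 <= k)%N by apply: leq_trans k3.
rewrite E6 //; congr EFin; rewrite /Ev3 /EvK.
apply: eq_big_seq => a va; rewrite !big_distrl.
apply: eq_big_seq => e ve; rewrite !big_distrl.
apply: eq_big_seq => u uv; rewrite !big_distrl.
apply: eq_big_seq => x xk; rewrite !big_distrl.
apply: eq_big_seq => u' uv'; rewrite !big_distrl.
apply: eq_big_seq => x' xk' /=.
rewrite (fX1 va) (feta (leqnn 2) ve) (feta j2 uv) (feta k2 uv') (fK j3 xk) (fK k3 xk').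
ring.
Qed.

Lemma E4N j (g : R -> R -> R -> nat -> R) : (3 <= j)%N ->
  measurable_fun setT (fun t => g (X1 t) (eta 2 t) (eta j t) (K j t)) ->
  ('E_P[fun t => g (X1 t) (eta 2 t) (eta j t) (K j t)] =
  (Ev3 (fun a => Ev3 (fun e => CE g a e)))%:E)%E.
Proof.
move=> j3 mg.
rewrite (@E6N j j.+1 (fun a e u x _ _ => g a e u x)) //; last first.
- by rewrite neq_ltn ltnSn.
- exact: leq_trans j3 _.
congr EFin; congr Ev3; apply/funext => a; congr Ev3; apply/funext => e.
rewrite /CE; congr Ev3; apply/funext => u; congr EvK; apply/funext => x.
by rewrite EvK_cst Ev3_cst.
Qed.

Lemma E2N (g : R -> R -> R) :
  measurable_fun setT (fun t => g (X1 t) (eta 2 t)) ->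
  ('E_P[fun t => g (X1 t) (eta 2 t)] = (Ev3 (fun a => Ev3 (fun e => g a e)))%:E)%E.
Proof.
move=> mg.
rewrite (@E4N 3 (fun a e _ _ => g a e)) //.
congr EFin; congr Ev3; apply/funext => a; congr Ev3; apply/funext => e.
by rewrite /CE EvK_cst Ev3_cst.
Qed.

Lemma E6prod j k (g1 g2 : R -> R -> R -> nat -> R) :
  (3 <= j)%N -> (3 <= k)%N -> j != k ->
  measurable_fun setT (fun t => g1 (X1 t) (eta 2 t) (eta j t) (K j t) *
                                g2 (X1 t) (eta 2 t) (eta k t) (K k t)) ->
  ('E_P[fun t => (g1 (X1 t) (eta 2 t) (eta j t) (K j t) *
                  g2 (X1 t) (eta 2 t) (eta k t) (K k t))%R] =
  (Ev3 (fun a => Ev3 (fun e => CE g1 a e * CE g2 a e)))%:E)%E.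
Proof.
move=> j3 k3 jk mg.
rewrite (@E6N j k (fun a e u x u' x' => g1 a e u x * g2 a e u' x')) //.
congr EFin; congr Ev3; apply/funext => a; congr Ev3; apply/funext => e.
rewrite /CE; do 3 rewrite ?Ev3E ?EvKE /=; ring.
Qed.


Definition BM (f : T -> R) := measurable_fun setT f /\ exists M : R, forall t, `|f t| <= M.

Lemma BM_Lfun f : BM f -> f \in Lfun P 1.
Proof.
move=> [mf [M hM]]; apply/Lfun1_integrable.
apply: measurable_bounded_integrable => //.
  by rewrite -ge0_fin_numE ?measure_ge0 // fin_num_measure.
apply: filterS (nbhs_pinfty_ge (num_real M)) => M0 hM0 x _.
exact: le_trans (hM x) hM0.
Qed.

Lemma BM_cst c : BM (fun _ => c).
Proof. by split; [exact: measurable_cst | exists `|c|]. Qed.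

Lemma BM_add f g : BM f -> BM g -> BM (fun t => f t + g t).
Proof.
move=> [mf [M hM]] [mg [N hN]]; split; first exact: measurable_funD.
by exists (M + N) => t; apply: le_trans (ler_normD _ _) _; apply: lerD.
Qed.

Lemma BM_mul f g : BM f -> BM g -> BM (fun t => f t * g t).
Proof.
move=> [mf [M hM]] [mg [N hN]]; split; first exact: measurable_funM.
exists (M * N) => t; rewrite normrM; apply: ler_pM => //.
Qed.

Lemma BM_opp f : BM f -> BM (fun t => - f t).
Proof.
move=> [mf [M hM]]; split; first exact: measurable_funN.
by exists M => t; rewrite normrN.
Qed.

Lemma BM_sum (I : Type) (s : seq I) (F : I -> T -> R) :
  (forall i, BM (F i)) -> BM (fun t => \sum_(i <- s) F i t).
Proof.
move=> hF; elim: s => [|a s IH].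
  by rewrite (_ : (fun t => _) = fun _ => 0); [exact: BM_cst | apply/funext => t; rewrite big_nil].
rewrite (_ : (fun t => _) = fun t => F a t + \sum_(i <- s) F i t).
  exact: BM_add.
by apply/funext => t; rewrite big_cons.
Qed.

Definition EE (f : T -> R) : R := fine ('E_P[f]).

Lemma EE_E f : BM f -> ('E_P[f] = (EE f)%:E)%E.
Proof. by move=> bf; rewrite /EE fineK // expectation_fin_num // BM_Lfun. Qed.

Lemma EE_add f g : BM f -> BM g -> EE (fun t => f t + g t) = EE f + EE g.
Proof.
move=> bf bg; rewrite /EE (_ : (fun t => f t + g t) = f \+ g) //.
by rewrite expectationD ?BM_Lfun // EE_E // EE_E.
Qed.

Lemma EE_scale k f : BM f -> EE (fun t => k * f t) = k * EE f.
Proof.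
move=> bf; rewrite /EE (_ : (fun t => k * f t) = k \o* f); last first.
  by apply/funext => t /=; rewrite mulrC.
by rewrite expectationZl ?BM_Lfun // EE_E.
Qed.

Lemma EE_ext f g : f =1 g -> EE f = EE g.
Proof. by move=> fg; rewrite (_ : f = g) //; apply/funext. Qed.


Lemma indK n k t : \1_[set t | K n t = k] t = (K n t == k)%:R :> R.
Proof. by rewrite indicE; case: eqP => h; [rewrite mem_set | rewrite memNset]. Qed.

Lemma mX_gen (Y : T -> R) (E : nat -> T -> R) : measurable_fun setT Y ->
  (forall n, (2 <= n)%N -> measurable_fun setT (E n)) ->
  forall n, measurable_fun setT (erw_X Y E K n).
Proof.
move=> mY mE [|[|[|n]]].
- exact: measurable_cst.
- exact: mY.
- by apply: measurable_funM => //; exact: mE.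
rewrite (_ : erw_X Y E K n.+3 = fun t => E n.+3 t * (\1_[set t | K n.+3 t = 1%N] t * Y t
   + \1_[set t | K n.+3 t = 2%N] t * (E 2 t * Y t))).
  apply: measurable_funM; first exact: mE.
  apply: measurable_funD; apply: measurable_funM.
  - by apply: measurable_indic; exact: mK.
  - exact: mY.
  - by apply: measurable_indic; exact: mK.
  - by apply: measurable_funM => //; exact: mE.
apply/funext => t; rewrite /erw_X !indK.
by case: (K n.+3 t) => [|[|[|k]]]; rewrite /= ?mul1r ?mul0r ?addr0 ?add0r ?mulr0.
Qed.

Lemma mS_gen (Y : T -> R) (E : nat -> T -> R) : measurable_fun setT Y ->
  (forall n, (2 <= n)%N -> measurable_fun setT (E n)) ->
  forall n, measurable_fun setT (fun t => erw_S Y E K n t / n%:R).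
Proof.
move=> mY mE n; apply: measurable_funM => //.
by apply: measurable_sum => k; exact: mX_gen.
Qed.

Lemma cl_ind x : cl x = \1_[set 1] x - \1_[set -1] x :> R.
Proof.
rewrite /cl !indicE; case: eqP => [->|h1].
  by rewrite mem_set // memNset ?subr0 //= => /eqP; rewrite (negbTE n1N1).
case: eqP => [->|h2].
  by rewrite memNset ?mem_set ?sub0r //= => /eqP; rewrite eq_sym (negbTE n1N1).
by rewrite !memNset ?subr0.
Qed.

Lemma mcl : measurable_fun setT cl.
Proof.
rewrite (_ : cl = fun x => \1_[set 1] x - \1_[set -1] x :> R); last first.
  by apply/funext => x; rewrite cl_ind.
by apply: measurable_funB; apply: measurable_indic; exact: measurable_set1.
Qed.

Definition X1c t := cl (X1 t).
Definition etac n t := cl (eta n t).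
Definition Xc n := erw_X X1c etac K n.
Definition Sc n := erw_S X1c etac K n.

Lemma mX1c : measurable_fun setT X1c.
Proof. exact: measurableT_comp mcl mX1. Qed.
Lemma metac n : (2 <= n)%N -> measurable_fun setT (etac n).
Proof. by move=> n2; apply: measurableT_comp mcl (meta n2). Qed.

Lemma normcl x : `|cl x| <= 1.
Proof. by rewrite /cl; case: ifP => _; [|case: ifP => _]; rewrite ?normrN ?normr1 ?normr0. Qed.

Lemma normXg a e u x : `|Xg a e u x| <= 1.
Proof.
rewrite /Xg normrM -[1]mulr1; apply: ler_pM => //; first exact: normcl.
case: ifP => _; first exact: normcl.
case: ifP => _; last by rewrite normr0.
by rewrite normrM -[1]mulr1; apply: ler_pM => //; exact: normcl.
Qed.

Lemma XcE n t : (3 <= n)%N -> Xc n t = Xg (X1 t) (eta 2 t) (eta n t) (K n t).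
Proof. by case: n => [|[|[|n]]]. Qed.

Lemma normXc n t : `|Xc n t| <= 1.
Proof.
case: n => [|[|[|n]]].
- by rewrite /Xc /erw_X normr0.
- rewrite /Xc /erw_X /X1c; exact: normcl.
- rewrite /Xc /erw_X /X1c /etac.
  by rewrite normrM -[1]mulr1; apply: ler_pM => //; exact: normcl.
- rewrite XcE //; exact: normXg.
Qed.

Lemma BM_Xc n : BM (Xc n).
Proof.
split; last by exists 1 => t; exact: normXc.
apply: mX_gen; first exact: mX1c.
exact: metac.
Qed.

Lemma BM_Sc n : BM (Sc n).
Proof. by apply: BM_sum => k; exact: BM_Xc. Qed.

Definition Lc (a e : R) : R := (p - q) * (cl a + cl e * cl a) / 2.
Definition L t := Lc (X1 t) (eta 2 t).

Lemma BM_L : BM L.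
Proof.
have bX := BM_Xc 1; have bX2 := BM_Xc 2.
rewrite (_ : L = fun t => (p - q) / 2 * (Xc 1 t + Xc 2 t)).
  by apply: BM_mul; [exact: BM_cst | exact: BM_add].
by apply/funext => t; rewrite /L /Lc /Xc /erw_X /X1c /etac; ring.
Qed.


Arguments Xg : simpl never.
Arguments Lc : simpl never.

Lemma rr : r = 1 - p - q.
Proof. by rewrite -hpqr; ring. Qed.

Lemma mXg k : (3 <= k)%N -> measurable_fun setT (fun t => Xg (X1 t) (eta 2 t) (eta k t) (K k t)).
Proof.
move=> k3; have [mk _] := BM_Xc k.
by rewrite (_ : (fun t => _) = Xc k) //; apply/funext => t; rewrite XcE.
Qed.

Lemma mLc : measurable_fun setT (fun t => Lc (X1 t) (eta 2 t)).
Proof. exact: (proj1 BM_L). Qed.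

Lemma meta2c : measurable_fun setT (fun t => cl (eta 2 t)).
Proof. exact: metac. Qed.

Ltac compute_E :=
  rewrite /CE; do 4 rewrite ?Ev3E ?EvKE /=;
  rewrite /Xg /Lc /= ?cl1 ?clN1 ?cl0 rr.

Definition m := p - q.
Definition s := p + q.
Definition mu0 := m ^+ 2 * (1 + m) / 2.
Definition a1 := m * s * (1 + m) / 2.
Definition a2 := m * s * (m + s) / 2.
Definition b0 := s ^+ 2 * (1 + s) / 2.
Definition c0 := m ^+ 2 * s * (1 + 3 * p - q) / 4.

Lemma M1 : EE (Xc 1) = m.
Proof.
rewrite /EE (@E2N (fun a e => cl a)); last exact: mX1c.
by compute_E; rewrite /m; ring.
Qed.

Lemma M2 : EE (Xc 2) = m ^+ 2.
Proof.
rewrite /EE (@E2N (fun a e => cl e * cl a)); last by apply: measurable_funM; [exact: meta2c | exact: mX1c].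
by compute_E; rewrite /m; ring.
Qed.

Lemma M3 k : (3 <= k)%N -> EE (Xc k) = mu0.
Proof.
move=> k3; rewrite (EE_ext (g := fun t => Xg (X1 t) (eta 2 t) (eta k t) (K k t))); last first.
  by move=> t; rewrite XcE.
rewrite /EE (@E4N k Xg) //; last exact: mXg.
by compute_E; rewrite /mu0 /m; field.
Qed.


Lemma mcl1 : measurable_fun setT (fun t => cl (X1 t)). Proof. exact: mX1c. Qed.
Lemma mcl2 : measurable_fun setT (fun t => cl (eta 2 t) * cl (X1 t)).
Proof. by apply: measurable_funM; [exact: meta2c | exact: mX1c]. Qed.

Lemma XkE k : (3 <= k)%N -> Xc k = fun t => Xg (X1 t) (eta 2 t) (eta k t) (K k t).
Proof. by move=> k3; apply/funext => t; rewrite XcE. Qed.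

Lemma M11 : EE (fun t => Xc 1 t * Xc 1 t) = s.
Proof.
rewrite /EE (@E2N (fun a e => cl a * cl a)); last by apply: measurable_funM; exact: mcl1.
by compute_E; rewrite /s; ring.
Qed.

Lemma M12 : EE (fun t => Xc 1 t * Xc 2 t) = m * s.
Proof.
rewrite /EE (@E2N (fun a e => cl a * (cl e * cl a))); last by apply: measurable_funM; [exact: mcl1|exact: mcl2].
by compute_E; rewrite /s /m; ring.
Qed.

Lemma M22 : EE (fun t => Xc 2 t * Xc 2 t) = s ^+ 2.
Proof.
rewrite /EE (@E2N (fun a e => (cl e * cl a) * (cl e * cl a))); last by apply: measurable_funM; exact: mcl2.
by compute_E; rewrite /s; ring.
Qed.

Lemma M1k k : (3 <= k)%N -> EE (fun t => Xc 1 t * Xc k t) = a1.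
Proof.
move=> k3; rewrite (EE_ext (g := fun t => cl (X1 t) * Xg (X1 t) (eta 2 t) (eta k t) (K k t))); last by move=> t; rewrite (XcE _ k3).
rewrite /EE (@E4N k (fun a e u x => cl a * Xg a e u x)) //; last first.
  by apply: measurable_funM; [exact: mcl1 | exact: mXg].
by compute_E; rewrite /a1 /s /m; field.
Qed.

Lemma M2k k : (3 <= k)%N -> EE (fun t => Xc 2 t * Xc k t) = a2.
Proof.
move=> k3; rewrite (EE_ext (g := fun t => (cl (eta 2 t) * cl (X1 t)) * Xg (X1 t) (eta 2 t) (eta k t) (K k t))); last by move=> t; rewrite (XcE _ k3).
rewrite /EE (@E4N k (fun a e u x => (cl e * cl a) * Xg a e u x)) //; last first.
  by apply: measurable_funM; [exact: mcl2 | exact: mXg].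
by compute_E; rewrite /a2 /s /m; field.
Qed.

Lemma Mkk k : (3 <= k)%N -> EE (fun t => Xc k t * Xc k t) = b0.
Proof.
move=> k3; rewrite (EE_ext (g := fun t => Xg (X1 t) (eta 2 t) (eta k t) (K k t) * Xg (X1 t) (eta 2 t) (eta k t) (K k t))); last by move=> t; rewrite (XcE _ k3).
rewrite /EE (@E4N k (fun a e u x => Xg a e u x * Xg a e u x)) //; last first.
  by apply: measurable_funM; exact: mXg.
by compute_E; rewrite /b0 /s; field.
Qed.

Lemma Mjk j k : (3 <= j)%N -> (3 <= k)%N -> j != k -> EE (fun t => Xc j t * Xc k t) = c0.
Proof.
move=> j3 k3 jk; rewrite (EE_ext (g := fun t => Xg (X1 t) (eta 2 t) (eta j t) (K j t) * Xg (X1 t) (eta 2 t) (eta k t) (K k t))); last by move=> t; rewrite (XcE _ j3) (XcE _ k3).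
rewrite /EE (@E6prod j k Xg Xg) //; last first.
  by apply: measurable_funM; exact: mXg.
by compute_E; rewrite /c0 /s /m; field.
Qed.

Lemma ML1 : EE (fun t => Xc 1 t * L t) = a1.
Proof.
rewrite /EE (@E2N (fun a e => cl a * Lc a e)); last by apply: measurable_funM; [exact: mcl1|exact: mLc].
by compute_E; rewrite /a1 /s /m; field.
Qed.

Lemma ML2 : EE (fun t => Xc 2 t * L t) = a2.
Proof.
rewrite /EE (@E2N (fun a e => (cl e * cl a) * Lc a e)); last by apply: measurable_funM; [exact: mcl2|exact: mLc].
by compute_E; rewrite /a2 /s /m; field.
Qed.

Lemma MLL : EE (fun t => L t * L t) = c0.
Proof.
rewrite /EE (@E2N (fun a e => Lc a e * Lc a e)); last by apply: measurable_funM; exact: mLc.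
by compute_E; rewrite /c0 /s /m; field.
Qed.

Lemma MLk k : (3 <= k)%N -> EE (fun t => Xc k t * L t) = c0.
Proof.
move=> k3; rewrite (EE_ext (g := fun t => Xg (X1 t) (eta 2 t) (eta k t) (K k t) * Lc (X1 t) (eta 2 t))); last by move=> t; rewrite (XcE _ k3).
rewrite /EE (@E4N k (fun a e u x => Xg a e u x * Lc a e)) //; last first.
  by apply: measurable_funM; [exact: mXg | exact: mLc].
by compute_E; rewrite /c0 /s /m; field.
Qed.


Lemma ScS n t : Sc n.+1 t = Sc n t + Xc n.+1 t.
Proof. by rewrite /Sc /erw_S big_nat_recr. Qed.

Lemma Sc0 t : Sc 0 t = 0.
Proof. by rewrite /Sc /erw_S big_geq. Qed.

Lemma Sc2 t : Sc 2 t = Xc 1 t + Xc 2 t.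
Proof. by rewrite !ScS Sc0 add0r. Qed.

Lemma ES i : EE (Sc i.+2) = m + m ^+ 2 + i%:R * mu0.
Proof.
elim: i => [|i IH].
  by rewrite (EE_ext Sc2) EE_add ?M1 ?M2 ?mul0r ?addr0 //; exact: BM_Xc.
rewrite (EE_ext (ScS i.+2)) EE_add ?IH ?M3 //; last by exact: BM_Xc.
  by rewrite -nat1r; ring.
exact: BM_Sc.
Qed.

Ltac bm := repeat first [exact: BM_Xc | exact: BM_Sc | exact: BM_L | exact: BM_cst
  | apply: BM_add | apply: BM_mul].

Lemma ESX i j : (3 <= j)%N -> (i.+2 < j)%N ->
  EE (fun t => Sc i.+2 t * Xc j t) = a1 + a2 + i%:R * c0.
Proof.
move=> j3; elim: i => [|i IH] hij.
  rewrite (EE_ext (g := fun t => Xc 1 t * Xc j t + Xc 2 t * Xc j t)); last first.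
    by move=> t; rewrite Sc2 mulrDl.
  rewrite EE_add ?M1k ?M2k //; try by bm.
  by ring.
rewrite (EE_ext (g := fun t => Sc i.+2 t * Xc j t + Xc i.+3 t * Xc j t)); last first.
  by move=> t; rewrite ScS mulrDl.
rewrite EE_add ?IH ?Mjk //; try by bm.
- by rewrite -nat1r; ring.
- by rewrite neq_ltn hij.
- exact: ltnW.
Qed.

Lemma ESS i : EE (fun t => Sc i.+2 t * Sc i.+2 t) =
  s + 2 * (m * s) + s ^+ 2 + i%:R * (b0 + 2 * a1 + 2 * a2) + i%:R * (i%:R - 1) * c0.
Proof.
elim: i => [|i IH].
  rewrite (EE_ext (g := fun t => Xc 1 t * Xc 1 t + (2 * (Xc 1 t * Xc 2 t) + Xc 2 t * Xc 2 t))); last first.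
    by move=> t; rewrite Sc2; ring.
  rewrite EE_add ?EE_add ?EE_scale ?M11 ?M12 ?M22; try by bm.
  by ring.
rewrite (EE_ext (g := fun t => Sc i.+2 t * Sc i.+2 t + (2 * (Sc i.+2 t * Xc i.+3 t) + Xc i.+3 t * Xc i.+3 t))); last first.
  by move=> t; rewrite ScS; ring.
rewrite EE_add ?EE_add ?EE_scale ?IH ?ESX ?Mkk //; try by bm.
by rewrite -nat1r; ring.
Qed.

Lemma ESL i : EE (fun t => Sc i.+2 t * L t) = a1 + a2 + i%:R * c0.
Proof.
elim: i => [|i IH].
  rewrite (EE_ext (g := fun t => Xc 1 t * L t + Xc 2 t * L t)); last first.
    by move=> t; rewrite Sc2 mulrDl.
  rewrite EE_add ?ML1 ?ML2 //; try by bm.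
  by ring.
rewrite (EE_ext (g := fun t => Sc i.+2 t * L t + Xc i.+3 t * L t)); last first.
  by move=> t; rewrite ScS mulrDl.
rewrite EE_add ?IH ?MLk //; try by bm.
by rewrite -nat1r; ring.
Qed.


Definition Zc n t := Sc n t / n%:R.

Lemma BM_Zc n : BM (Zc n).
Proof. by apply: BM_mul; [exact: BM_Sc | exact: BM_cst]. Qed.

Lemma natS2 i : i%:R = (i.+2)%:R - 2 :> R.
Proof. by rewrite -[i.+2]addn2 natrD addrK. Qed.

Lemma N2neq0 i : (i.+2)%:R != 0 :> R.
Proof. by rewrite pnatr_eq0. Qed.

Lemma N2neq0' i : 2 + i%:R != 0 :> R.
Proof. by rewrite addrC -natrD pnatr_eq0 addn2. Qed.

Ltac nz := first [exact: N2neq0 | exact: N2neq0' | idtac].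

Lemma EZ i : EE (Zc i.+2) = (m + m ^+ 2 + i%:R * mu0) / (i.+2)%:R.
Proof.
rewrite (EE_ext (g := fun t => (i.+2)%:R^-1 * Sc i.+2 t)); last by move=> t; rewrite /Zc mulrC.
rewrite EE_scale ?ES; [by rewrite mulrC | exact: BM_Sc].
Qed.

Lemma EZZ i : EE (fun t => Zc i.+2 t * Zc i.+2 t) =
  (s + 2 * (m * s) + s ^+ 2 + i%:R * (b0 + 2 * a1 + 2 * a2) + i%:R * (i%:R - 1) * c0)
  / ((i.+2)%:R ^+ 2).
Proof.
rewrite (EE_ext (g := fun t => ((i.+2)%:R ^+ 2)^-1 * (Sc i.+2 t * Sc i.+2 t))); last first.
  move=> t; rewrite /Zc; field; nz.
rewrite EE_scale ?ESS; [by rewrite mulrC | bm].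
Qed.

Lemma EZL i : EE (fun t => (Zc i.+2 t - L t) * (Zc i.+2 t - L t)) =
  (s + 2 * (m * s) + s ^+ 2 + i%:R * (b0 + 2 * a1 + 2 * a2) + i%:R * (i%:R - 1) * c0)
  / ((i.+2)%:R ^+ 2) - 2 * (a1 + a2 + i%:R * c0) / (i.+2)%:R + c0.
Proof.
rewrite (EE_ext (g := fun t => ((i.+2)%:R ^+ 2)^-1 * (Sc i.+2 t * Sc i.+2 t) +
   ((-2 / (i.+2)%:R) * (Sc i.+2 t * L t) + L t * L t))); last first.
  move=> t; rewrite /Zc; field; nz.
rewrite EE_add ?EE_add ?EE_scale ?EE_scale ?ESS ?ESL ?MLL; try by bm.
by rewrite mulNr; field; nz.
Qed.


Lemma LIM1 : EE (Zc n) @[n --> \oo] --> mu0.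
Proof.
apply: (@lim_poly _ _ _ (m + m ^+ 2 - 2 * mu0) 0) => i.
rewrite EZ natS2; field; nz.
Qed.


Lemma LIM2 : EE (fun t => Zc n t * Zc n t) @[n --> \oo] --> c0.
Proof.
apply: (@lim_poly _ _ _ (b0 + 2 * a1 + 2 * a2 - 5 * c0)
  (s + 2 * (m * s) + s ^+ 2 - 2 * (b0 + 2 * a1 + 2 * a2) + 6 * c0)) => i.
rewrite EZZ natS2; field; nz.
Qed.

Lemma LIM3 : EE (fun t => (Zc n t - L t) * (Zc n t - L t)) @[n --> \oo] --> 0.
Proof.
apply: (@lim_poly _ _ _ (b0 + 2 * a1 + 2 * a2 - 5 * c0 - 2 * (a1 + a2 - 2 * c0))
  (s + 2 * (m * s) + s ^+ 2 - 2 * (b0 + 2 * a1 + 2 * a2) + 6 * c0)) => i.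
rewrite EZL natS2; field; nz.
Qed.


Definition G t := X1 t = cl (X1 t) /\ forall k, (2 <= k)%N -> eta k t = cl (eta k t).

Lemma cl_id x : x \in vs -> cl x = x.
Proof. by rewrite /vs !inE => /or3P[] /eqP ->; rewrite ?cl1 ?clN1 ?cl0. Qed.

Lemma negG : P.-negligible (~` [set t | G t]).
Proof.
apply: (@negligibleS _ _ _ _ (bad3 X1 `|`
   \bigcup_k (if (2 <= k)%N then bad3 (eta k) else set0))).
  move=> t /= nG; apply: contrapT => hN; apply: nG; split.
    by rewrite cl_id //; apply: in_vs => h; apply: hN; left.
  move=> k k2; rewrite cl_id //; apply: in_vs => h; apply: hN; right.
  by exists k => //; rewrite k2.
apply: negligibleU; first exact: negl_X1.
apply: negligible_bigcup => k; case: ifP => k2; first exact: negl_eta.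
exact: negligible_set0.
Qed.

Lemma XG n t : G t -> erw_X X1 eta K n t = Xc n t.
Proof.
move=> [h1 h2]; case: n => [|[|[|n]]]; rewrite /Xc /erw_X /X1c /etac //.
- by rewrite -h1 -(h2 2).
- by rewrite -h1 -(h2 2) // -(h2 n.+3).
Qed.

Definition Z n t := erw_S X1 eta K n t / n%:R.

Lemma ZG n t : G t -> Z n t = Zc n t.
Proof.
move=> Gt; rewrite /Z /Zc /Sc /erw_S; congr (_ / _).
by apply: eq_bigr => k _; rewrite XG.
Qed.

Lemma mZ n : measurable_fun setT (Z n).
Proof. by apply: mS_gen. Qed.

Lemma mZc n : measurable_fun setT (Zc n).
Proof. exact: (proj1 (BM_Zc n)). Qed.

Lemma Eae (f g : T -> R) : measurable_fun setT f -> measurable_fun setT g ->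
  (forall t, G t -> f t = g t) -> ('E_P[f] = 'E_P[g])%E.
Proof.
move=> mf mg fg; rewrite unlock; apply: ae_eq_integral => //.
- exact/measurable_EFinP.
- exact/measurable_EFinP.
apply: (negligibleS _ negG) => t /= ht Gt; apply: ht => _.
by rewrite (fg t Gt).
Qed.

Lemma Pae (A B : set T) : measurable A -> measurable B ->
  (forall t, G t -> (A t <-> B t)) -> P A = P B.
Proof.
move=> mA mB AB; have [N [mN PN sN]] := negG.
have h (C D : set T) : measurable C -> measurable D ->
    (forall t, G t -> C t -> D t) -> (P C <= P D)%E.
  move=> mC mD CD.
  have h1 : (P C <= P (D `|` N))%E.
    apply: Ple => //; first exact: measurableU.
    move=> t Ct; case: (pselect (G t)) => Gt; first by left; exact: CD.
    by right; apply: sN.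
  apply: (le_trans h1); apply: (le_trans (PU2 mD mN)).
  by rewrite PN adde0.
apply/eqP; rewrite eq_le; apply/andP; split; apply: h => // t Gt; by move/(AB t Gt).
Qed.

Lemma EZ_eq n : ('E_P[Z n] = 'E_P[Zc n])%E.
Proof. by apply: Eae; [exact: mZ | exact: mZc | exact: ZG]. Qed.

Lemma var_eq n : variance P (Z n) = variance P (Zc n).
Proof.
rewrite /variance !covariance.unlock EZ_eq.
apply: Eae.
- by apply: measurable_funM; apply: measurable_funB => //; exact: mZ.
- by apply: measurable_funM; apply: measurable_funB => //; exact: mZc.
by move=> t Gt; rewrite !fctE /= ZG.
Qed.

Lemma var_Zc n : variance P (Zc n) =
  (EE (fun t => Zc n t * Zc n t) - EE (Zc n) ^+ 2)%:E.
Proof.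
have bZ := BM_Zc n.
have bZZ : BM (fun t => Zc n t * Zc n t) by apply: BM_mul.
rewrite /variance covarianceE ?BM_Lfun //.
by rewrite (EE_E bZ) (EE_E bZZ) -EFinM -EFinB expr2.
Qed.

Lemma Lc11 : Lc 1 1 = p - q. Proof. by rewrite /Lc cl1; field. Qed.
Lemma Lc1N : Lc 1 (-1) = 0. Proof. by rewrite /Lc cl1 clN1; field. Qed.
Lemma Lc10 : Lc 1 0 = (p - q) / 2. Proof. by rewrite /Lc cl1 cl0; field. Qed.
Lemma LcN1 : Lc (-1) 1 = - (p - q). Proof. by rewrite /Lc cl1 clN1; field. Qed.
Lemma LcNN : Lc (-1) (-1) = 0. Proof. by rewrite /Lc clN1; field. Qed.
Lemma LcN0 : Lc (-1) 0 = - ((p - q) / 2). Proof. by rewrite /Lc clN1 cl0; field. Qed.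
Lemma Lc0 e : Lc 0 e = 0. Proof. by rewrite /Lc cl0; field. Qed.

Lemma mle (f : T -> R) (y : R) : measurable_fun setT f -> measurable [set t | f t <= y].
Proof.
move=> mf; have := mf measurableT _ (measurable_itv `]-oo, y]); rewrite setTI.
by rewrite (_ : [set t | f t <= y] = f @^-1` `]-oo, y]) //; apply/seteqP; split => t /=;
  rewrite in_itv /=.
Qed.

Lemma mge (f : T -> R) (y : R) : measurable_fun setT f -> measurable [set t | y <= f t].
Proof.
move=> mf; have := mf measurableT _ (measurable_itv `[y, +oo[); rewrite setTI.
by rewrite (_ : [set t | y <= f t] = f @^-1` `[y, +oo[) //; apply/seteqP; split => t /=;
  rewrite in_itv /= andbT.
Qed.


Lemma PL y : fine (P [set t | L t <= y]) = erw_limit_cdf p q r y.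
Proof.
have mA := mle y (proj1 BM_L).
have e : \1_[set t | L t <= y] = (fun t => ((Lc (X1 t) (eta 2 t) <= y)%R)%:R :> R).
  apply/funext => t; rewrite indicE; case: (boolP (L t <= y)) => h.
    by rewrite mem_set.
  by rewrite memNset //= => h'; rewrite h' in h.
have mg : measurable_fun setT (fun t => ((Lc (X1 t) (eta 2 t) <= y)%R)%:R :> R).
  by rewrite -e; exact: measurable_indic.
rewrite -(expectation_indic P mA) e (@E2N (fun a e => ((Lc a e <= y)%R)%:R)) //=.
do 2 rewrite ?Ev3E /=.
rewrite Lc11 Lc1N Lc10 LcN1 LcNN LcN0 !Lc0 /erw_limit_cdf.
case: (p - q <= y); case: ((p - q) / 2 <= y); case: (0 <= y);
  case: (- ((p - q) / 2) <= y); case: (- (p - q) <= y); rewrite /= rr; ring.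
Qed.

Lemma EE_ge0 f : (forall t, 0 <= f t) -> 0 <= EE f.
Proof. by move=> f0; rewrite /EE; apply: fine_ge0; apply: expectation_ge0. Qed.

Lemma EE_le f g : BM f -> BM g -> (forall t, f t <= g t) -> EE f <= EE g.
Proof.
move=> bf bg fg.
have h : 0 <= EE (fun t => g t + (-1) * f t) by apply: EE_ge0 => t; rewrite mulN1r subr_ge0.
rewrite EE_add ?EE_scale // in h; last by apply: BM_mul => //; exact: BM_cst.
by rewrite mulN1r subr_ge0 in h.
Qed.

Lemma BM_ind (A : set T) : measurable A -> BM (\1_A).
Proof.
move=> mA; split; first exact: measurable_indic.
by exists 1 => t; rewrite indicE; case: (_ \in _); rewrite ?normr1 ?normr0.
Qed.

Lemma EE_ind (A : set T) : measurable A -> EE (\1_A) = fine (P A).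
Proof. by move=> mA; rewrite /EE expectation_indic. Qed.

Lemma mL : measurable_fun setT L.
Proof. exact: (proj1 BM_L). Qed.

Lemma cheb n (de : R) : 0 < de ->
  fine (P [set t | de <= `|Zc n t - L t|]) <=
  EE (fun t => (Zc n t - L t) * (Zc n t - L t)) / de ^+ 2.
Proof.
move=> de0.
have mA : measurable [set t | de <= `|Zc n t - L t|].
  apply: mge; apply: measurableT_comp => //; apply: measurable_funB; [exact: mZc | exact: mL].
rewrite ler_pdivlMr ?exprn_gt0 // mulrC -EE_ind // -EE_scale; last exact: BM_ind.
apply: EE_le.
- by apply: BM_mul; [exact: BM_cst | exact: BM_ind].
- apply: BM_mul; apply: BM_add; first exact: BM_Zc.
  + by apply: BM_opp; exact: BM_L.
  + exact: BM_Zc.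
  + by apply: BM_opp; exact: BM_L.
move=> t; rewrite indicE; case: (boolP (t \in _)) => h.
  rewrite inE /= in h.
  have hsq : (Zc n t - L t) * (Zc n t - L t) = `|Zc n t - L t| * `|Zc n t - L t|.
    by rewrite -normrM ger0_norm // -expr2 sqr_ge0.
  rewrite hsq mulr1 expr2; apply: ler_pM; try exact: ltW; exact: h.
by rewrite mulr0 -expr2 sqr_ge0.
Qed.


Lemma prle (A B C : set T) : measurable A -> measurable B -> measurable C ->
  A `<=` B `|` C -> fine (P A) <= fine (P B) + fine (P C).
Proof.
move=> mA mB mC ABC; rewrite -lee_fin EFinD -!PE //.
apply: (le_trans _ (PU2 mB mC)); apply: Ple => //; exact: measurableU.
Qed.

Lemma cvgd (x : R) : {for x, continuous (erw_limit_cdf p q r)} ->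
  fine (P [set t | Zc n t <= x]) @[n --> \oo] --> erw_limit_cdf p q r x.
Proof.
move=> hc; set F := erw_limit_cdf p q r.
apply/cvgrPdist_lt => e e0.
have e20 : 0 < e / 2 by rewrite divr_gt0.
have hF := hc; move/cvgrPdist_lt: hF => /(_ _ e20) hF.
case/nbhs_ballP: hF => dd dd0 hdd.
set de := dd / 2.
have de0 : 0 < de by rewrite divr_gt0.
have dedd : de < dd by rewrite /de ltr_pdivrMr // ltr_pMr // ltr1n.
have Fp : `|F x - F (x + de)| < e / 2.
  apply: (hdd (x + de)); rewrite /ball /= opprD addrA subrr sub0r normrN gtr0_norm //.
have Fm : `|F x - F (x - de)| < e / 2.
  apply: (hdd (x - de)); rewrite /ball /= opprB addrC subrK gtr0_norm //.
have hD : (EE (fun t => (Zc n t - L t) * (Zc n t - L t)) / de ^+ 2) @[n --> \oo] --> 0.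
  rewrite -(mul0r ((de ^+ 2)^-1)); apply: cvgMr_tmp; exact: LIM3.
have {}hD := (proj1 (cvgrPdist_lt _ _) hD) _ e20.
near=> n.
have hn : `|0 - EE (fun t => (Zc n t - L t) * (Zc n t - L t)) / de ^+ 2| < e / 2.
  by near: n; exact: hD.
set Q := fine (P [set t | Zc n t <= x]).
set B := fine (P [set t | de <= `|Zc n t - L t|]).
have mB : measurable [set t | de <= `|Zc n t - L t|].
  apply: mge; apply: measurableT_comp => //; apply: measurable_funB; [exact: mZc | exact: mL].
have hB : B < e / 2.
  rewrite sub0r normrN in hn.
  exact: le_lt_trans (cheb n de0) (le_lt_trans (ler_norm _) hn).
have B0 : 0 <= B by apply: fine_ge0; apply: measure_ge0.
have h1 : Q <= F (x + de) + B.
  rewrite /F -PL; apply: prle => //; [exact: mle (mZc n) | exact: mle mL |].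
  move=> t /= ht; case: (lerP de `|Zc n t - L t|) => hb; [by right | left].
  move/ltr_normlP: hb => [hb1 hb2]; lra.
have h2 : F (x - de) <= Q + B.
  rewrite /F -PL; apply: prle => //; [exact: mle mL | exact: mle (mZc n) |].
  move=> t /= ht; case: (lerP de `|Zc n t - L t|) => hb; [by right | left].
  move/ltr_normlP: hb => [hb1 hb2]; lra.
move/ltr_normlP: Fp => [Fp1 Fp2]; move/ltr_normlP: Fm => [Fm1 Fm2].
apply/ltr_normlP; split; lra.
Unshelve. all: by end_near.
Qed.


Lemma cvgd_Z (x : R) : {for x, continuous (erw_limit_cdf p q r)} ->
  fine (P [set t | Z n t <= x]) @[n --> \oo] --> erw_limit_cdf p q r x.
Proof.
move=> hc.
have -> : (fun n => fine (P [set t | Z n t <= x])) = (fun n => fine (P [set t | Zc n t <= x])).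
  apply/funext => n; congr fine; apply: Pae; [exact: mle (mZ n) | exact: mle (mZc n) |].
  by move=> t Gt /=; rewrite ZG.
exact: cvgd.
Qed.

Lemma E_lim : ('E_P[Z n] @[n --> \oo] --> mu0%:E)%E.
Proof.
have -> : (fun n => 'E_P[Z n]%E) = (fun n => (EE (Zc n))%:E).
  by apply/funext => n; rewrite EZ_eq EE_E //; exact: BM_Zc.
apply: cvg_EFin; first exact: nearW.
exact: LIM1.
Qed.

Lemma var_lim : (variance P (Z n) @[n --> \oo] --> (c0 - mu0 * mu0)%:E)%E.
Proof.
have -> : (fun n => variance P (Z n)) =
    (fun n => (EE (fun t => Zc n t * Zc n t) - EE (Zc n) * EE (Zc n))%:E).
  by apply/funext => n; rewrite var_eq var_Zc expr2.
apply: cvg_EFin; first exact: nearW.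
apply: cvgB; first exact: LIM2.
exact: cvgM LIM1 LIM1.
Qed.

End Main.

Unset Implicit Arguments.

Theorem theorem6p1 (d : measure_display) (T : measurableType d) (R : realType)
  (P : probability T R) (p q r : R)
  (X1 : T -> R) (eta : nat -> T -> R) (K : nat -> T -> nat) :
  0 < p < 1 -> 0 < q < 1 -> 0 < r < 1 -> p + q + r = 1 ->
  measurable_fun setT X1 ->
  (forall n, (2 <= n)%N -> measurable_fun setT (eta n)) ->
  (forall n k, (3 <= n)%N -> measurable [set t | K n t = k]) ->
  P [set t | X1 t = 1] = p%:E ->
  P [set t | X1 t = -1] = q%:E ->
  P [set t | X1 t = 0] = r%:E ->
  (forall n, (2 <= n)%N ->
     [/\ P [set t | eta n t = 1] = p%:E,
         P [set t | eta n t = -1] = q%:E &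
         P [set t | eta n t = 0] = r%:E]) ->
  (forall n, (3 <= n)%N ->
     P [set t | K n t = 1%N] = (2^-1)%:E /\ P [set t | K n t = 2%N] = (2^-1)%:E) ->
  erw_independent P X1 eta K ->
  let Z := fun n : nat => fun t => erw_S X1 eta K n t / n%:R in
  cvg_in_distribution P Z (erw_limit_cdf p q r) /\
  ('E_P[Z n] @[n --> \oo] --> ((p - q) ^+ 2 / 2 * (1 + (p - q)))%:E)%E /\
  (variance P (Z n) @[n --> \oo] -->
     ((p - q) ^+ 2 / 4 *
       ((p + q) * (1 + 3 * p - q) - (p - q) ^+ 2 * (1 + (p - q)) ^+ 2))%:E)%E.
Proof.
move=> hp hq hr hpqr mX1 meta mK PX1 PX2 PX3 Peta PK hind Z.
split; [|split].
- move=> x hc.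
  by apply: cvgd_Z.
- have -> : (p - q) ^+ 2 / 2 * (1 + (p - q)) = mu0 p q by rewrite /mu0 /m; field.
  exact: (E_lim hpqr mX1 meta mK PX1 PX2 PX3 Peta PK hind).
- have -> : (p - q) ^+ 2 / 4 *
       ((p + q) * (1 + 3 * p - q) - (p - q) ^+ 2 * (1 + (p - q)) ^+ 2) =
       c0 p q - mu0 p q * mu0 p q by rewrite /c0 /mu0 /m /s; field.
  exact: (var_lim hpqr mX1 meta mK PX1 PX2 PX3 Peta PK hind).
Qed.
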